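(* Let $G=(N,A)$ be an arc-compressed $s$-$t$ DAG. Then every arc $uv\in A$ that is an $s$-dominator is the immediate $s$-dominator of at least two of the arcs leaving $v$.
   Context: An $s$-$t$ DAG is a directed acyclic multigraph (parallel arcs allowed) with a unique source $s$ and a unique sink $t$ such that every node is reachable from $s$ and every node reaches $t$. It is arc-compressed if no node has both indegree exactly one and outdegree exactly one (i.e. every maximal path whose internal nodes have indegree and outdegree one consists of a single arc). An arc $ab$ $s$-dominates an arc $xy$ if $ab=xy$ or every $s$-$x$ path contains $ab$; it strictly $s$-dominates $xy$ if moreover $ab\neq xy$. An arc is an $s$-dominator if it strictly $s$-dominates some arc. The immediate $s$-dominator of an arc $xy$ having at least one strict $s$-dominator is the strict $s$-dominator of $xy$ that is $s$-dominated by all strict $s$-dominators of $xy$. *)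

(* Defs.v *)
From mathcomp Require Import all_boot.
Set Implicit Arguments. Unset Strict Implicit. Unset Printing Implicit Defensive.

(* A directed multigraph: finite node type N, finite arc type A, and
   tail/head maps; parallel arcs are distinct elements of A. *)
Section Multigraph.
Variables (N A : finType) (tl hd : A -> N).

Fixpoint is_walk (u v : N) (p : seq A) : bool :=
  match p with
  | [::] => u == v
  | e :: p' => (tl e == u) && is_walk (hd e) v p'
  end.

Definition indeg (v : N) : nat := #|[set e : A | hd e == v]|.
Definition outdeg (v : N) : nat := #|[set e : A | tl e == v]|.

Definition reaches (u v : N) : Prop := exists p, is_walk u v p.

Definition acyclic : Prop := forall (u : N) (p : seq A), is_walk u u p -> p = [::].

Definition st_dag (s t : N) : Prop :=
  [/\ acyclic,
      (forall v, indeg v == 0 <-> v = s),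
      (forall v, outdeg v == 0 <-> v = t),
      (forall v, reaches s v) &
      (forall v, reaches v t)].

Definition arc_compressed : Prop :=
  forall v : N, ~ (indeg v = 1 /\ outdeg v = 1).

Definition sdom (s : N) (ab xy : A) : Prop :=
  ab = xy \/ (forall p, is_walk s (tl xy) p -> ab \in p).

Definition strict_sdom (s : N) (ab xy : A) : Prop :=
  ab <> xy /\ sdom s ab xy.

Definition is_sdominator (s : N) (ab : A) : Prop :=
  exists xy, strict_sdom s ab xy.

Definition idom (s : N) (d xy : A) : Prop :=
  strict_sdom s d xy /\ (forall d', strict_sdom s d' xy -> sdom s d' d).

End Multigraph.

(* Main.v *)
Require Import Defs.
From mathcomp Require Import all_boot.

Lemma walk_cat (N A : finType) (tl hd : A -> N) u v w p q :
  is_walk tl hd u v p -> is_walk tl hd v w q -> is_walk tl hd u w (p ++ q).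
Proof.
elim: p u => [|e p IH] u /=; first by move/eqP->.
by case/andP=> -> /IH H /H.
Qed.
Arguments walk_cat {N A tl hd u v w p q}.

Lemma walk_split (N A : finType) (tl hd : A -> N) u w p e :
  is_walk tl hd u w p -> e \in p ->
  exists p1 p2, is_walk tl hd u (tl e) p1 /\ is_walk tl hd (hd e) w p2.
Proof.
elim: p u => [|f p IH] u //=.
case/andP=> /eqP Hf Hw; rewrite in_cons => /orP [/eqP ->|Hin].
  by exists [::], p; rewrite /= Hf eqxx.
have [p1 [p2 [H1 H2]]] := IH _ Hw Hin.
by exists (f :: p1), p2; rewrite /= Hf eqxx H1.
Qed.
Arguments walk_split {N A tl hd u w p e}.

Theorem lemma6 (N A : finType) (tl hd : A -> N) (s t : N) :
  st_dag tl hd s t ->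
  arc_compressed tl hd ->
  forall uv : A, is_sdominator tl hd s uv ->
  exists e1 e2 : A,
    [/\ e1 <> e2, tl e1 = hd uv, tl e2 = hd uv,
        idom tl hd s uv e1 & idom tl hd s uv e2].
Proof.
case=> Hac Hin Hout Hrs Hrt Hcomp uv [xy [Hne [//|Hdom]]].
have noback : forall q, ~ is_walk tl hd (hd uv) (tl uv) q.
  by move=> q Hq; have := Hac (tl uv) (uv :: q); rewrite /= eqxx Hq => /(_ isT).
have [p0 Hp0] := Hrs (tl xy).
have [p1 [p2 [_ Hp2]]] := walk_split Hp0 (Hdom _ Hp0).
have K : forall q, is_walk tl hd s (hd uv) q -> uv \in q.
  move=> q Hq; have := Hdom _ (walk_cat Hq Hp2); rewrite mem_cat => /orP [//|H].
  have [q1 [q2 [H1 _]]] := walk_split Hp2 H; by case: (noback q1).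
have Hid : forall e, tl e = hd uv -> idom tl hd s uv e.
  move=> e He; split.
    split; last by right; rewrite He.
    move=> E; subst e; apply: (noback [::]); by rewrite /= He.
  move=> d [Hde [//|Hd]].
  have [->|Hdu] := eqVneq d uv; first by left.
  right=> p Hp.
  have := Hd (p ++ [:: uv]); rewrite He => /(_ (walk_cat Hp _)).
  rewrite /= eqxx eqxx mem_cat mem_seq1 (negbTE Hdu) orbF; exact.
have Hind : indeg hd (hd uv) = 1.
  rewrite /indeg (_ : [set e | hd e == hd uv] = [set uv]) ?cards1 //.
  apply/setP=> e; rewrite !inE; apply/idP/idP; last by move/eqP->.
  move/eqP=> He; have [q Hq] := Hrs (tl e).
  have We : is_walk tl hd (tl e) (hd uv) [:: e] by rewrite /= eqxx He eqxx.
  have := K (q ++ [:: e]) (walk_cat Hq We).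
  rewrite mem_cat mem_seq1 => /orP [H|/eqP ->//].
  have [q1 [q2 [_ H2]]] := walk_split Hq H.
  have := Hac _ (q2 ++ [:: e]) (walk_cat H2 We).
  by case: q2 {H2}.
have [e0 He0] : exists e, tl e = hd uv.
  have Wx : is_walk tl hd (tl xy) (hd xy) [:: xy] by rewrite /= eqxx eqxx.
  have := walk_cat Hp2 Wx.
  case: p2 {Hp2 K} => [|f0 q0] /= /andP [/eqP <- _].
    by exists xy.
  by exists f0.
set S := [set e | tl e == hd uv].
have HS : 1 < #|S|.
  have : #|S| != 0.
    rewrite cards_eq0; apply/set0Pn; exists e0; by rewrite inE He0.
  have : #|S| != 1.
    apply/eqP => H; apply: (Hcomp (hd uv)); split; [exact: Hind | exact: H].
  by case: #|S| => [|[|n]].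
have He0S : e0 \in S by rewrite inE He0.
move: HS; rewrite (cardsD1 e0) He0S ltnS lt0n cards_eq0 => /set0Pn [e1].
rewrite !inE => /andP [Hne1 /eqP He1].
exists e0, e1; split => //; try by apply: Hid.
by move=> E; rewrite E eqxx in Hne1.
Qed.
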